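(* Let $X$ be a real Banach space, $K\subset X$ compact, $\lambda_1,\dots,\lambda_m\in X^*$ with $\|\lambda_j\|_{X^*}=1$, $f\in K$, $w:=\lambda(f)$, and assume $R(K_w)_X\neq0$. Define on $X$ the loss $$\mathcal{L}_K(g):=\|\lambda(g)-w\|+\operatorname{dist}(g,K)_X .$$ Let $C>2$ and let $\delta>0$ satisfy $$2\delta+2R(K(w,4\delta))_X\le C\,R(K_w)_X$$ (which holds for all sufficiently small $\delta>0$). Let $\Sigma\subset X$ satisfy $\operatorname{dist}(K,\Sigma)_X<\delta$ and let $\hat f\in\mathop{\rm argmin}_{g\in\Sigma}\mathcal{L}_K(g)$ be any minimizer. Then $\|f-\hat f\|_X\le C\,R(K_w)_X$.
   Context: For $g\in X$, $\lambda(g):=(\lambda_1(g),\dots,\lambda_m(g))$; on $\mathbb{R}^m$, $\|v\|:=\big[\frac1m\sum_{j=1}^m|v_j|^2\big]^{1/2}$. $\operatorname{dist}(g,K)_X:=\inf_{h\in K}\|g-h\|_X$; for $A,B\subset X$, $\operatorname{dist}(A,B)_X:=\sup_{a\in A}\inf_{b\in B}\|a-b\|_X$. $K_w:=\{h\in K:\lambda(h)=w\}$, $K(w,\varepsilon):=\bigcup_{w'\in\mathbb{R}^m,\ \|w'-w\|\le\varepsilon}K_{w'}$. For $S\subset X$, $R(S)_X:=\inf\{r:\ S\subset B(z,r)_X\text{ for some }z\in X\}$ (Chebyshev radius). *)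

(* Defs.v *)
From HB Require Import structures.
From mathcomp Require Import all_boot all_order all_algebra.
From mathcomp Require Import all_classical all_reals all_analysis.
Set Implicit Arguments. Unset Strict Implicit. Unset Printing Implicit Defensive.
Import Order.TTheory GRing.Theory Num.Theory.
Import numFieldNormedType.Exports.
Local Open Scope classical_set_scope.
Local Open Scope ring_scope.

Section Defs.
Variables (R : realType) (X : normedModType R).

Definition opnorm (l : X -> R) : R :=
  sup [set `|l x| | x in [set x : X | `|x| <= 1]].

Definition rnorm (m : nat) (v : 'I_m -> R) : R :=
  Num.sqrt (m%:R^-1 * \sum_(j < m) `|v j| ^+ 2).

Definition lamdiff (m : nat) (lam : 'I_m -> X -> R) (g : X) (w : 'I_m -> R) :
  'I_m -> R := fun j => lam j g - w j.

Definition distX (g : X) (K : set X) : R := inf [set `|g - h| | h in K].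

Definition distS (A B : set X) : R := sup [set distX a B | a in A].

Definition Kw (m : nat) (lam : 'I_m -> X -> R) (K : set X) (w : 'I_m -> R) :
  set X := [set h | K h /\ (forall j, lam j h = w j)].

Definition Kweps (m : nat) (lam : 'I_m -> X -> R) (K : set X) (w : 'I_m -> R)
  (eps : R) : set X := [set h | K h /\ rnorm (lamdiff lam h w) <= eps].

Definition cheb (S : set X) : R :=
  inf [set r : R | 0 <= r /\ exists z : X, forall x, S x -> `|x - z| <= r].

Definition lossK (m : nat) (lam : 'I_m -> X -> R) (K : set X) (w : 'I_m -> R)
  (g : X) : R := rnorm (lamdiff lam g w) + distX g K.

End Defs.

(* Main.v *)
Require Import Defs.
From HB Require Import structures.
From mathcomp Require Import all_boot all_order all_algebra.
From mathcomp Require Import all_classical all_reals all_analysis.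
From mathcomp Require Import ring lra.
Import Order.TTheory GRing.Theory Num.Theory.
Import numFieldNormedType.Exports.
Local Open Scope classical_set_scope.
Local Open Scope ring_scope.

Section R1.
Variable R : realType.

Lemma cs_lite (m : nat) (x : 'I_m -> R) : (0 < m)%N ->
  (\sum_(j < m) x j) ^+ 2 <= m%:R * \sum_(j < m) x j ^+ 2.
Proof.
move=> m0.
have mR : (m%:R : R) != 0 by rewrite pnatr_eq0 -lt0n.
set T := \sum_(j < m) x j; set S := \sum_(j < m) x j ^+ 2.
pose mu := T / m%:R.
have H : 0 <= \sum_(j < m) (x j - mu) ^+ 2 by apply: sumr_ge0 => j _; exact: sqr_ge0.
have E : \sum_(j < m) (x j - mu) ^+ 2 = S - T * mu *+ 2 + mu ^+ 2 *+ m.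
  under eq_bigr do rewrite sqrrB.
  by rewrite big_split /= sumrB sumr_const card_ord sumrMnl -mulr_suml.
rewrite E /mu in H.
have : 0 <= m%:R * (S - T * (T / m%:R) *+ 2 + (T / m%:R) ^+ 2 *+ m).
  by rewrite mulr_ge0.
move=> H2; rewrite -subr_ge0; apply: le_trans H2 _.
rewrite le_eqVlt; apply/orP; left; apply/eqP.
rewrite -mulr_natr; field; exact: mR.
Qed.


Lemma rnorm_le (m : nat) (v : 'I_m -> R) (c : R) : 0 <= c ->
  (forall j, `|v j| <= c) -> rnorm v <= c.
Proof.
move=> c0 hv; rewrite /rnorm -[leRHS](ger0_norm c0) -sqrtr_sqr ler_sqrt ?sqr_ge0 //.
have hs : \sum_(j < m) `|v j| ^+ 2 <= c ^+ 2 *+ m.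
  rewrite -[m in _ *+ m]card_ord -sumr_const; apply: ler_sum => j _.
  by rewrite lerXn2r ?nnegrE.
case: m v hv hs => [|m] v hv hs.
  by rewrite invr0 mul0r sqr_ge0.
apply: (le_trans (ler_wpM2l _ hs)); first by rewrite invr_ge0 ler0n.
rewrite [X in X <= _](_ : _ = c ^+ 2) // -mulr_natr; field; by rewrite nat1r pnatr_eq0.
Qed.

Lemma rnorm_add (m : nat) (a b : 'I_m -> R) (c : R) : 0 <= c ->
  (forall j, `|b j| <= c) -> rnorm (fun j => a j + b j) <= rnorm a + c.
Proof.
move=> c0 hb; rewrite /rnorm.
case: m a b hb => [|m] a b hb.
  by rewrite !big_ord0 mulr0 sqrtr0 addr_ge0 ?sqrtr_ge0.
set S := \sum_(j < m.+1) `|a j| ^+ 2.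
set T := \sum_(j < m.+1) `|a j|.
have hcs : T ^+ 2 <= m.+1%:R * S.
  have := @cs_lite m.+1 (fun j => `|a j|) isT.
  by [].
have hsum : \sum_(j < m.+1) `|a j + b j| ^+ 2 <= S + (c * T) *+ 2 + c ^+ 2 *+ m.+1.
  have -> : S + (c * T) *+ 2 + c ^+ 2 *+ m.+1 =
     \sum_(j < m.+1) (`|a j| ^+ 2 + (c * `|a j|) *+ 2 + c ^+ 2).
    by rewrite !big_split /= sumr_const card_ord -mulr_sumr mulr2n.
  apply: ler_sum => j _.
  have h1 : `|a j + b j| <= `|a j| + c by apply: (le_trans (ler_normD _ _)); rewrite lerD2l.
  have h0 : 0 <= `|a j + b j| by [].
  have h2 : 0 <= `|a j| by [].
  rewrite mulr2n; nra.
have S0 : 0 <= S by apply: sumr_ge0 => j _; exact: sqr_ge0.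
have T0 : 0 <= T by apply: sumr_ge0 => j _.
set M := m.+1%:R : R.
have M0 : 0 < M by rewrite ltr0n.
set q := Num.sqrt (M^-1 * S).
have q0 : 0 <= q by exact: sqrtr_ge0.
have qq : q ^+ 2 = M^-1 * S by rewrite sqr_sqrtr // mulr_ge0 // invr_ge0 ltW.
have hT : T / M <= q.
  have TM0 : 0 <= T / M by rewrite divr_ge0 // ltW.
  have SM0 : 0 <= M^-1 * S by rewrite mulr_ge0 // invr_ge0 ltW.
  rewrite -[leLHS](ger0_norm TM0) -sqrtr_sqr /q ler_sqrt //.
  rewrite expr_div_n ler_pdivrMr ?exprn_gt0 //.
  have -> : M^-1 * S * M ^+ 2 = M * S by field; rewrite gt_eqF.
  exact: hcs.
have qc0 : 0 <= q + c by rewrite addr_ge0.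
rewrite -[leRHS](ger0_norm qc0) -sqrtr_sqr ler_sqrt; last exact: sqr_ge0.
apply: (le_trans (ler_wpM2l _ hsum)); first by rewrite invr_ge0 ltW.
have MV : M^-1 * (c ^+ 2 *+ m.+1) = c ^+ 2.
  by rewrite -mulr_natr -/M mulrCA mulVf ?mulr1 // gt_eqF.
have MT : M^-1 * (c * T *+ 2) = (c * (T / M)) *+ 2.
  rewrite -mulrnAr mulrCA mulrnAr. rewrite (mulrC T); exact: mulrnAr.
rewrite mulrDr MV mulrDr MT -qq sqrrD lerD2r lerD2l.
by rewrite lerMn2r /= (mulrC q) ler_wpM2l.
Qed.


End R1.

Set Implicit Arguments. Unset Strict Implicit. Unset Printing Implicit Defensive.

Section N1.
Variables (R : realType) (X : normedModType R).

Lemma lin0 (l : X -> R) : (forall (a : R) (x y : X), l (a *: x + y) = a * l x + l y) ->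
  l 0 = 0.
Proof.
move=> lin; have := lin 1 0 0; rewrite scale1r addr0 mul1r; lra.
Qed.

Lemma linB (l : X -> R) : (forall (a : R) (x y : X), l (a *: x + y) = a * l x + l y) ->
  forall x y, l (x - y) = l x - l y.
Proof.
move=> lin x y; have := lin (-1) y x.
by rewrite scaleN1r addrC => ->; rewrite mulN1r addrC.
Qed.

Lemma lam_bound (l : X -> R) : (forall (a : R) (x y : X), l (a *: x + y) = a * l x + l y) ->
  opnorm l = 1 -> forall x, `|l x| <= `|x|.
Proof.
move=> lin op1 x.
set E := [set `|l x| | x in [set x : X | `|x| <= 1]].
have hs : has_sup E.
  apply: contrapT => hn; move: op1; rewrite /opnorm -/E sup_out //.
  by move=> /eqP; rewrite eq_sym oner_eq0.
have ub : forall y : X, `|y| <= 1 -> `|l y| <= 1.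
  move=> y hy; rewrite -op1; apply: sup_upper_bound => //; by exists y.
have [->|x0] := eqVneq x 0; first by rewrite lin0 // !normr0.
have nx : 0 < `|x| by rewrite normr_gt0.
have := ub (`|x|^-1 *: x).
have ix : 0 <= `|x|^-1 by rewrite invr_ge0 ltW.
rewrite normrZ (ger0_norm ix) mulVf ?gt_eqF // lexx => /(_ isT).
have := lin (`|x|^-1) x 0; rewrite addr0 lin0 // addr0 => ->.
rewrite normrM (ger0_norm ix) mulrC -ler_pdivlMr ?invr_gt0 //.
by rewrite invrK mul1r.
Qed.

Lemma distX_le (A : set X) g h : A h -> distX g A <= `|g - h|.
Proof.
move=> Ah; rewrite /distX; apply: ge_inf; last by exists h.
by exists 0 => _ [y _ <-].
Qed.

Lemma distX_adh (A : set X) g h0 e : A h0 -> 0 < e ->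
  exists2 h, A h & `|g - h| < distX g A + e.
Proof.
move=> Ah0 e0; have [] := @inf_adherent _ [set `|g - h| | h in A] e e0.
  split; first by exists `|g - h0|, h0.
  by exists 0 => _ [y _ <-].
by move=> _ [h Ah <-] hl; exists h.
Qed.

Lemma distX_ge0 (A : set X) g : A !=set0 -> 0 <= distX g A.
Proof.
move=> [h0 Ah0]; rewrite /distX; apply: lb_le_inf; first by exists `|g - h0|, h0.
by move=> _ [y _ <-].
Qed.

Lemma cheb_diam (S : set X) (M : R) : (forall x, S x -> `|x| <= M) ->
  forall x y, S x -> S y -> `|x - y| <= 2 * cheb S.
Proof.
move=> hM x y Sx Sy.
set E := [set r : R | 0 <= r /\ exists z : X, forall x, S x -> `|x - z| <= r].
have hE : has_inf E.
  split; last by exists 0 => r [].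
  exists (Num.max M 0); split; first by rewrite le_max lexx orbT.
  exists 0 => u Su; rewrite subr0 le_max hM //.
apply/ler_addgt0Pr => e e0.
have [r [r0 [z hz]] hr] := inf_adherent (divr_gt0 e0 (ltr0n R 2)) hE.
have : `|x - y| <= 2 * r.
  rewrite (_ : x - y = (x - z) - (y - z)); last by rewrite opprB addrA subrK.
  by apply: (le_trans (ler_normB _ _)); rewrite mulr2n mulrDl mul1r lerD ?hz.
move=> h; apply: (le_trans h); rewrite /cheb -/E.
have : 2 * r <= 2 * (inf E + e / 2) by rewrite ler_pM2l ?ltW.
by rewrite mulrDr mulrCA mulfV ?mulr1 // pnatr_eq0.
Qed.

End N1.
Unset Implicit Arguments.


Theorem theorem3p4 (R : realType) (X : completeNormedModType R) (K : set X)
  (m : nat) (lam : 'I_m -> X -> R) (f : X) (C delta : R) (Sigma : set X)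
  (fhat : X) :
  compact K ->
  (forall j (a : R) (x y : X), lam j (a *: x + y) = a * lam j x + lam j y) ->
  (forall j, continuous (lam j)) ->
  (forall j, opnorm (lam j) = 1) ->
  K f ->
  cheb (Kw lam K (fun j => lam j f)) != 0 ->
  2 < C -> 0 < delta ->
  2 * delta + 2 * cheb (Kweps lam K (fun j => lam j f) (4 * delta))
    <= C * cheb (Kw lam K (fun j => lam j f)) ->
  distS K Sigma < delta ->
  Sigma fhat ->
  (forall g, Sigma g ->
     lossK lam K (fun j => lam j f) fhat <= lossK lam K (fun j => lam j f) g) ->
  `|f - fhat| <= C * cheb (Kw lam K (fun j => lam j f)).
Proof.
move=> cK lin _ op1 Kf _ _ d0 hyp dS Sf hmin.
set w := fun j => lam j f.
have [M0 M0pos hM] := pinfty_ex_gt0 (compact_bounded cK).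
have hK : forall x, K x -> `|x| <= M0 by move=> x Kx; exact: hM.
have lamle : forall j x, `|lam j x| <= `|x| by move=> j; exact: lam_bound (lin j) (op1 j).
have lamB : forall j x y, lam j (x - y) = lam j x - lam j y by move=> j; exact: linB (lin j).
have hfS : distX f Sigma <= distS K Sigma.
  rewrite /distS; apply: ub_le_sup; last by exists f.
  exists (M0 + `|fhat|) => _ [a Ka <-].
  apply: (le_trans (distX_le _ Sf)); apply: (le_trans (ler_normB _ _)).
  by rewrite lerD2r hK.
have [g Sg hg] : exists2 g, Sigma g & `|f - g| < delta.
  have e0 : 0 < delta - distX f Sigma by rewrite subr_gt0 (le_lt_trans hfS).
  have [g Sg hg] := distX_adh f Sf e0.
  by exists g => //; lra.
have hloss : lossK lam K w fhat <= 2 * delta.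
  apply: (le_trans (hmin g Sg)); rewrite /lossK.
  have h1 : rnorm (lamdiff lam g w) <= `|f - g|.
    apply: rnorm_le => // j; rewrite /lamdiff /w -lamB distrC.
    exact: lamle.
  have h2 : distX g K <= `|f - g| by rewrite distrC; exact: distX_le.
  lra.
apply/ler_addgt0Pr => e e0.
set e' := Num.min e delta.
have e'0 : 0 < e' by rewrite lt_min e0 d0.
have e'e : e' <= e by rewrite ge_min lexx.
have e'd : e' <= delta by rewrite ge_min lexx orbT.
have [h Kh hh] := distX_adh fhat Kf e'0.
have r00 : 0 <= rnorm (lamdiff lam fhat w) by exact: sqrtr_ge0.
have hr : rnorm (lamdiff lam h w) <= rnorm (lamdiff lam fhat w) + `|fhat - h|.
  have := @rnorm_add R m (lamdiff lam fhat w) (fun j => lam j h - lam j fhat) `|fhat - h| (normr_ge0 _).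
  have hb : forall j, `|lam j h - lam j fhat| <= `|fhat - h|.
    by move=> j; rewrite -lamB distrC lamle.
  move=> /(_ hb); apply: le_trans.
  rewrite le_eqVlt; apply/orP; left; apply/eqP; congr rnorm; apply/funext => j; rewrite /lamdiff; lra.
have Kwh : Kweps lam K w (4 * delta) h.
  split => //; move: hloss; rewrite /lossK; lra.
have Kwf : Kweps lam K w (4 * delta) f.
  split => //; apply: rnorm_le; first lra.
  by move=> j; rewrite /lamdiff /w subrr normr0; lra.
have hd := cheb_diam (S := Kweps lam K w (4 * delta)) (M := M0) (fun x Kx => hK x Kx.1) Kwf Kwh.
have : `|f - fhat| <= `|f - h| + `|fhat - h|.
  rewrite (distrC fhat); rewrite (_ : f - fhat = (f - h) + (h - fhat)); last by rewrite addrA subrK.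
  exact: ler_normD.
move: hloss hyp; rewrite /lossK -/w => hloss hyp.
lra.
Qed.
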